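(* Let $X=(X(t))_{t\ge0}$ be a centered Gaussian process, self-similar of order $\beta\in(0,1)$, satisfying (H.1) with parameters $\alpha,\lambda,\psi$. Then there exists a continuous function $u_1:(0,\infty)\to\mathbb{R}$ such that for all $s>0$, $$\mathbb{E}\big[(X(s+1)-X(s))^2\big]=2\lambda s^{2\beta-\alpha}(1+u_1(s)).$$ Furthermore, for every $\eta>0$ there exists a constant $C_\eta>0$ such that for all $s\ge\eta$, $|u_1(s)|\le C_\eta s^{-\delta_1}$, where $\delta_1=1-\alpha$ if $\alpha<1$ and $\delta_1=2-\alpha$ if $\alpha\ge1$.
   Context: Self-similar of order $\beta$ means $(X(ct))_{t\ge0}\overset{law}{=}(c^\beta X(t))_{t\ge0}$ for all $c>0$. Let $\phi(x)=\mathbb{E}[X(1)X(x)]$, $x\ge1$, so $\mathbb{E}[X(s)X(t)]=s^{2\beta}\phi(t/s)$ for $0<s\le t$. (H.1): there is $\alpha\in(0,2\beta]$ with $\phi(x)=-\lambda(x-1)^\alpha+\psi(x)$, where $\lambda>0$, $\psi$ is twice differentiable on an open set containing $[1,\infty)$, and there is $C\ge0$ such that for $x\in(1,\infty)$: $|\psi'(x)|\le Cx^{\alpha-1}$, $|\psi''(x)|\le Cx^{-1}(x-1)^{\alpha-1}$, and $\psi'(1)=\beta\psi(1)$ when $\alpha\ge1$. *)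

(* Defs.v *)
From HB Require Import structures.
From mathcomp Require Import all_boot all_order all_algebra.
From mathcomp Require Import all_classical all_reals all_analysis.
Set Implicit Arguments. Unset Strict Implicit. Unset Printing Implicit Defensive.
Import Order.TTheory GRing.Theory Num.Theory.
Import numFieldNormedType.Exports.
Local Open Scope classical_set_scope.
Local Open Scope ring_scope.

Definition gaussian_rv d (T : measurableType d) (R : realType)
    (P : probability T R) (Y : T -> R) : Prop :=
  exists m : R,
    (exists s : R, s != 0 /\
       forall A : set R, measurable A -> P (Y @^-1` A) = normal_prob m s A)
    \/ (forall A : set R, measurable A -> P (Y @^-1` A) = \d_m A).

Definition centered_gaussian_process d (T : measurableType d) (R : realType)
    (P : probability T R) (X : R -> T -> R) : Prop :=
  (forall t, 0 <= t -> measurable_fun setT (X t)) /\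
  (forall t, 0 <= t -> ('E_P[X t] = 0)%E) /\
  (forall (n : nat) (ts : 'I_n -> R) (a : 'I_n -> R),
      (forall i, 0 <= ts i) ->
      gaussian_rv P (fun w => \sum_(i < n) a i * X (ts i) w)).

(* Self-similarity of order beta: for every c > 0, the processes
   (X(ct))_{t>=0} and (c^beta X(t))_{t>=0} have the same finite-dimensional
   distributions (tested on measurable rectangles, which generate the
   product sigma-algebra and form a pi-system). *)
Definition self_similar d (T : measurableType d) (R : realType)
    (P : probability T R) (beta : R) (X : R -> T -> R) : Prop :=
  forall c : R, 0 < c ->
  forall (n : nat) (ts : 'I_n -> R) (B : 'I_n -> set R),
    (forall i, 0 <= ts i) -> (forall i, measurable (B i)) ->
    (P [set w | forall i, B i (X (c * ts i)%R w)]
    = P [set w | forall i, B i (c `^ beta * X (ts i) w)%R])%E.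

Definition phi_cov d (T : measurableType d) (R : realType)
    (P : probability T R) (X : R -> T -> R) (x : R) : \bar R :=
  ('E_P[fun w => (X 1 w * X x w)%R])%E.

Definition H1 d (T : measurableType d) (R : realType)
    (P : probability T R) (beta : R) (X : R -> T -> R)
    (alpha lambda : R) (psi : R -> R) : Prop :=
  [/\ (0 < alpha /\ alpha <= 2 * beta) /\ 0 < lambda,
      (forall x : R, 1 <= x ->
         phi_cov P X x = (- lambda * (x - 1) `^ alpha + psi x)%:E),
      (exists U : set R, open U /\ `[1, +oo[ `<=` U /\
         forall x, U x -> derivable psi x 1 /\ derivable (derive1 psi) x 1),
      (exists C : R, 0 <= C /\
         forall x : R, 1 < x ->
           `|derive1 psi x| <= C * x `^ (alpha - 1) /\
           `|derive1 (derive1 psi) x| <= C * x^-1 * (x - 1) `^ (alpha - 1))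
    & (1 <= alpha -> derive1 psi 1 = beta * psi 1)].

Definition delta1 (R : realType) (alpha : R) : R :=
  if alpha < 1 then 1 - alpha else 2 - alpha.

(* Main.v *)
Require Import Defs.
From HB Require Import structures.
From mathcomp Require Import all_boot all_order all_algebra.
From mathcomp Require Import all_classical all_reals all_analysis.
From mathcomp Require Import measurable_realfun ring lra.
Import Order.TTheory GRing.Theory Num.Theory.
Import numFieldNormedType.Exports.
Local Open Scope classical_set_scope.
Local Open Scope ring_scope.

Lemma int_sq d (T : measurableType d) (R : realType) (P : probability T R)
  (a : T -> R) (A : R) : measurable_fun setT a ->
  (\int[P]_w (a w * a w)%:E = A%:E)%E -> P.-integrable setT (EFin \o (fun w => a w * a w)).
Proof.
move=> ma Ia; apply/integrableP; split.
  by apply/measurable_EFinP; apply: measurable_funM.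
rewrite (eq_integral (fun w => (a w * a w)%:E)) ?Ia ?ltry // => w _.
by rewrite /= ger0_norm // -expr2 sqr_ge0.
Qed.

Lemma sq_diff d (T : measurableType d) (R : realType) (P : probability T R)
  (a b : T -> R) (A B C : R) : measurable_fun setT a -> measurable_fun setT b ->
  (\int[P]_w (a w * a w)%:E = A%:E)%E ->
  (\int[P]_w (b w * b w)%:E = B%:E)%E ->
  (\int[P]_w (a w * b w)%:E = C%:E)%E ->
  (\int[P]_w ((b w - a w) ^+ 2)%:E = (B + A - 2 * C)%:E)%E.
Proof.
move=> ma mb Ia Ib Iab.
have iA := @int_sq _ _ _ P _ _ ma Ia; have iB := @int_sq _ _ _ P _ _ mb Ib.
have iBA : P.-integrable setT (EFin \o (fun w => b w * b w + a w * a w)).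
  by rewrite /comp; under eq_fun do rewrite EFinD; exact: integrableD.
have iAB : P.-integrable setT (EFin \o (fun w => a w * b w)).
  apply: le_integrable iBA => //.
    by apply/measurable_EFinP; apply: measurable_funM.
  move=> w _ /=; rewrite lee_fin.
  rewrite [leRHS]ger0_norm; last by rewrite addr_ge0 // -expr2 sqr_ge0.
  rewrite normrM; have := sqr_ge0 (`|a w| - `|b w|).
  rewrite sqrrB -!expr2 !real_normK ?num_real //; nra.
have i2AB : P.-integrable setT (EFin \o (fun w => 2 * (a w * b w))).
  by rewrite /comp; under eq_fun do rewrite EFinM; exact: integrableZl.
rewrite (eq_integral (fun w => (b w * b w + a w * a w)%:E - (2 * (a w * b w))%:E))%E; last first.
  by move=> w _; rewrite -EFinB; congr (_%:E); rewrite sqrrB; ring.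
rewrite integralB_EFin //.
rewrite (eq_integral (fun w => (b w * b w)%:E + (a w * a w)%:E))%E; last first.
  by move=> w _; rewrite EFinD.
rewrite integralD_EFin // Ia Ib.
rewrite (eq_integral (fun w => 2%:E * (a w * b w)%:E))%E; last first.
  by move=> w _; rewrite EFinM.
by rewrite integralZl // Iab.
Qed.
Section scale.
Context d (T : measurableType d) (R : realType) (P : probability T R).

Lemma push_unique (f1 f2 : T -> R * R) :
  measurable_fun setT f1 -> measurable_fun setT f2 ->
  (forall A B, measurable A -> measurable B ->
     P (f1 @^-1` (A `*` B)) = P (f2 @^-1` (A `*` B))) ->
  forall (g : R * R -> R), measurable_fun setT g -> (forall z, 0 <= g z) ->
  (\int[P]_w (g (f1 w))%:E = \int[P]_w (g (f2 w))%:E)%E.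
Proof.
move=> mf1 mf2 eqAB g mg g0.
have mgE : measurable_fun setT (EFin \o g) by exact/measurable_EFinP.
have -> : (\int[P]_w (g (f1 w))%:E = \int[pushforward P f1]_z (g z)%:E)%E.
  by rewrite ge0_integral_pushforward//= => y _; rewrite lee_fin.
have -> : (\int[P]_w (g (f2 w))%:E = \int[pushforward P f2]_z (g z)%:E)%E.
  by rewrite ge0_integral_pushforward//= => y _; rewrite lee_fin.
apply: eq_measure_integral => A mA _.
apply: (measure_unique [set A `*` B | A in measurable & B in measurable] (fun=> setT)) => //.
- exact: measurable_prod_measurableType.
- move=> _ _ [A1 mA1 [B1 mB1 <-]] [A2 mA2 [B2 mB2 <-]].
  exists (A1 `&` A2); first exact: measurableI.
  exists (B1 `&` B2); first exact: measurableI.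
  by rewrite setXI.
- by move=> _; exists setT => //; exists setT => //; rewrite setXTT.
- by rewrite bigcup_const.
- by move=> _ [A1 mA1 [B1 mB1 <-]]; exact: eqAB.
- move=> _; apply: (le_lt_trans (probability_le1 P _)); last exact: ltry.
  by move: (mf1 measurableT setT measurableT); rewrite setTI.
Qed.
End scale.

Lemma set2E (F : 'I_2 -> Prop) : (forall i, F i) <-> F ord0 /\ F (@Ordinal 2 1 erefl).
Proof.
split; first by move=> H; split; apply: H.
move=> [H0 H1] [[|[|k]] Hk] //.
- by rewrite (_ : Ordinal Hk = ord0) //; apply: val_inj.
- by rewrite (_ : Ordinal Hk = Ordinal (erefl (1 < 2)%N)) //; apply: val_inj.
Qed.

Lemma ss_int d (T : measurableType d) (R : realType) (P : probability T R)
  (beta : R) (X : R -> T -> R) :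
  (forall t, 0 <= t -> measurable_fun setT (X t)) ->
  self_similar P beta X ->
  forall c t1 t2, 0 < c -> 0 <= t1 -> 0 <= t2 ->
  forall (g : R * R -> R), measurable_fun setT g -> (forall z, 0 <= g z) ->
  (\int[P]_w (g (X (c * t1) w, X (c * t2) w))%:E
   = \int[P]_w (g (c `^ beta * X t1 w, c `^ beta * X t2 w))%:E)%E.
Proof.
move=> HX Hss c t1 t2 c0 t10 t20 g mg g0.
have mc t : 0 <= t -> measurable_fun setT (fun w => c `^ beta * X t w).
  by move=> t0; apply: measurable_funM; [exact: measurable_cst|exact: HX].
apply: (@push_unique _ _ _ P (fun w => (X (c * t1) w, X (c * t2) w))
                    (fun w => (c `^ beta * X t1 w, c `^ beta * X t2 w))) => //.
- apply: measurable_fun_pair; apply: HX; exact: mulr_ge0 (ltW c0) _.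
- by apply: measurable_fun_pair; apply: mc.
move=> A B mA mB.
pose ts := fun i : 'I_2 => if val i == 0%N then t1 else t2.
pose Bs := fun i : 'I_2 => if val i == 0%N then A else B.
have := Hss c c0 2%N ts Bs.
have -> : [set w | forall i, Bs i (X (c * ts i) w)] =
          (fun w => (X (c * t1) w, X (c * t2) w)) @^-1` (A `*` B).
  by apply/seteqP; split => w /=; rewrite set2E.
have -> : [set w | forall i, Bs i (c `^ beta * X (ts i) w)] =
          (fun w => (c `^ beta * X t1 w, c `^ beta * X t2 w)) @^-1` (A `*` B).
  by apply/seteqP; split => w /=; rewrite set2E.
apply.
- by move=> i; rewrite /ts; case: ifP.
- by move=> i; rewrite /Bs; case: ifP.
Qed.

Lemma var_formula d (T : measurableType d) (R : realType) (P : probability T R)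
  (beta : R) (X : R -> T -> R) (alpha lambda : R) (psi : R -> R) :
  (forall t, 0 <= t -> measurable_fun setT (X t)) ->
  self_similar P beta X -> 0 < alpha ->
  (forall x : R, 1 <= x -> phi_cov P X x = (- lambda * (x - 1) `^ alpha + psi x)%:E) ->
  forall s, 0 < s ->
  ('E_P[fun w => ((X (s + 1) w - X s w) ^+ 2)%R]
   = (s `^ (2 * beta) * ((1 + s^-1) `^ (2 * beta) * psi 1 + psi 1
       - 2 * (- lambda * (s^-1) `^ alpha + psi (1 + s^-1))))%:E)%E.
Proof.
move=> HX Hss a0 Hphi s s0.
set h := s^-1.
have h0 : 0 < h by rewrite invr_gt0.
have h1 : 0 <= 1 + h by rewrite addr_ge0 // ltW.
have mX1 := HX 1 ler01.
have mXh := HX _ h1.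
have Ia : (\int[P]_w (X 1 w * X 1 w)%:E = (psi 1)%:E)%E.
  have := Hphi 1 (lexx 1); rewrite /phi_cov unlock => ->.
  by rewrite subrr powR0 ?gt_eqF // mulr0 add0r.
have Iab : (\int[P]_w (X 1 w * X (1 + h) w)%:E = (- lambda * h `^ alpha + psi (1 + h))%:E)%E.
  have h1' : 1 <= 1 + h by rewrite lerDl ltW.
  have := Hphi (1 + h) h1'.
  by rewrite /phi_cov unlock => ->; rewrite addrAC subrr add0r.
have Ib : (\int[P]_w (X (1 + h) w * X (1 + h) w)%:E = ((1 + h) `^ (2 * beta) * psi 1)%:E)%E.
  have h1p : 0 < 1 + h by exact: addr_gt0 ltr01 h0.
  have := @ss_int _ _ _ P beta X HX Hss (1 + h) 1 1 h1p ler01 ler01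
    (fun z => z.1 * z.1).
  rewrite mulr1 => ->; last first.
  - by move=> z; rewrite -expr2 sqr_ge0.
  - by apply: measurable_funM; exact: measurable_fst.
  rewrite /=.
  rewrite (eq_integral (fun w => ((1 + h) `^ beta * (1 + h) `^ beta)%:E * (X 1 w * X 1 w)%:E))%E; last first.
    by move=> w _; rewrite -EFinM; congr (_%:E); ring.
  rewrite ge0_integralZl_EFin //; last 3 first.
  - by move=> w _; rewrite lee_fin -expr2 sqr_ge0.
  - by apply/measurable_EFinP; apply: measurable_funM.
  - by rewrite mulr_ge0 // powR_ge0.
  rewrite Ia -EFinM; congr (_%:E); congr (_ * _).
  have -> : 2 * beta = beta + beta by ring.
  by rewrite powRD // (gt_eqF h1p) implybT.
have Hsh : s * (1 + h) = s + 1 by rewrite mulrDr mulr1 mulfV ?gt_eqF.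
have := @ss_int _ _ _ P beta X HX Hss s 1 (1 + h) s0 ler01 h1 (fun z => (z.2 - z.1) ^+ 2).
rewrite mulr1 Hsh /= => H.
rewrite unlock H; last 2 first.
- by apply: measurable_funX; apply: measurable_funB; [exact: measurable_snd|exact: measurable_fst].
- by move=> z; rewrite sqr_ge0.
rewrite (eq_integral (fun w => ((s `^ beta) ^+ 2)%:E * ((X (1 + h) w - X 1 w) ^+ 2)%:E))%E; last first.
  by move=> w _; rewrite -EFinM; congr (_%:E); ring.
rewrite ge0_integralZl_EFin //; last 3 first.
- by move=> w _; rewrite lee_fin sqr_ge0.
- by apply/measurable_EFinP; apply: measurable_funX; apply: measurable_funB.
- by rewrite sqr_ge0.
rewrite (@sq_diff _ _ _ P _ _ _ _ _ mX1 mXh Ia Ib Iab) -EFinM; congr (_%:E); congr (_ * _).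
have -> : 2 * beta = beta + beta by ring.
by rewrite powRD ?(gt_eqF s0) ?implybT // expr2.
Qed.
Lemma mvt1 (R : realType) (f : R -> R) (a b : R) : a < b ->
  (forall x, a <= x -> x <= b -> derivable f x 1) ->
  exists2 c, a < c < b & f b - f a = derive1 f c * (b - a).
Proof.
move=> ab df.
have H1 : forall x, x \in `]a, b[ -> is_derive x 1 f (derive1 f x).
  move=> x; rewrite in_itv /= => /andP[ax xb].
  rewrite derive1E; apply: derivableP; apply: df; exact: ltW.
have H2 : {within `[a, b], continuous f}.
  apply: derivable_within_continuous => x; rewrite in_itv /= => /andP[ax xb].
  exact: df.
have [c cab E] := @MVT R f (derive1 f) a b ab H1 H2.
by exists c; [move: cab; rewrite in_itv|].
Qed.

Lemma taylor1 (R : realType) (f : R -> R) (a b M : R) : a < b ->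
  (forall x, a <= x -> x <= b -> derivable f x 1) ->
  (forall x, a < x -> x < b -> `|derive1 f x| <= M) ->
  `|f b - f a| <= M * (b - a).
Proof.
move=> ab df bd.
have [c /andP[ac cb] ->] := @mvt1 _ f a b ab df.
rewrite normrM (@ger0_norm _ (b - a)); last by rewrite subr_ge0 ltW.
by rewrite ler_wpM2r ?subr_ge0 ?(ltW ab) // bd.
Qed.

Lemma taylor2 (R : realType) (f : R -> R) (a b M : R) : a < b ->
  (forall x, a <= x -> x <= b -> derivable f x 1) ->
  (forall x, a < x -> x < b -> `|derive1 f x - derive1 f a| <= M * (x - a)) ->
  `|f b - f a - derive1 f a * (b - a)| <= M * (b - a) ^+ 2.
Proof.
move=> ab df bd.
have [c /andP[ac cb] ->] := @mvt1 _ f a b ab df.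
rewrite -mulrBl normrM (@ger0_norm _ (b - a)); last by rewrite subr_ge0 ltW.
have := bd c ac cb => H.
have M0 : 0 <= M.
  have : 0 <= M * (c - a) by apply: le_trans H.
  by rewrite pmulr_lge0 // subr_gt0.
apply: (le_trans (ler_wpM2r _ H)); first by rewrite subr_ge0 ltW.
rewrite expr2 mulrA ler_wpM2r ?subr_ge0 ?(ltW ab) //.
by rewrite ler_wpM2l // lerB // ltW.
Qed.

Definition Dh (R : realType) (psi : R -> R) (beta h : R) :=
  (1 + h) `^ (2 * beta) * psi 1 + psi 1 - 2 * psi (1 + h).
Arguments Dh {R}.

Lemma powR_le1 (R : realType) (x r : R) : 1 <= x -> r <= 0 -> x `^ r <= 1.
Proof. by move=> x1 r0; rewrite -(powRr0 x); apply: ler_powR. Qed.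

Lemma powR_ge1 (R : realType) (x r : R) : 1 <= x -> 0 <= r -> 1 <= x `^ r.
Proof. by move=> x1 r0; rewrite -(powRr0 x); apply: ler_powR. Qed.

Lemma D_bound_lt1 (R : realType) (psi : R -> R) (beta alpha C H : R) :
  0 < beta -> beta < 1 -> alpha < 1 -> 0 <= C ->
  (forall x, 1 <= x -> derivable psi x 1) ->
  (forall x, 1 < x -> `|derive1 psi x| <= C * x `^ (alpha - 1)) ->
  forall h, 0 < h -> h <= H ->
  `|Dh psi beta h| <= (`|psi 1| * (2 + H) + 2 * C) * h.
Proof.
move=> b0 b1 a1 C0 dpsi bpsi h h0 hH.
have h1 : 1 <= 1 + h by rewrite lerDl ltW.
have P1 : `|(1 + h) `^ (2 * beta) - 1| <= h * (2 + H).
  rewrite ger0_norm; last by rewrite subr_ge0 powR_ge1 // mulr_ge0 // ltW.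
  have : (1 + h) `^ (2 * beta) <= (1 + h) `^ 2%:R.
    by apply: ler_powR => //; rewrite -subr_ge0 /=; lra.
  rewrite powR_mulrn; last by lra.
  nra.
have P2 : `|psi (1 + h) - psi 1| <= C * (1 + h - 1).
  apply: taylor1; first by lra.
    by move=> x x1 _; apply: dpsi.
  move=> x x1 _; apply: (le_trans (bpsi x x1)).
  by rewrite -[leRHS]mulr1 ler_wpM2l // powR_le1 ?ltW //; lra.
have -> : Dh psi beta h = psi 1 * ((1 + h) `^ (2 * beta) - 1) - 2 * (psi (1 + h) - psi 1).
  by rewrite /Dh; ring.
apply: (le_trans (ler_normB _ _)); rewrite !normrM (@ger0_norm _ 2) //.
have := normr_ge0 (psi 1); move: P1 P2.
set A := `|_ - 1|; set B := `|_ - psi 1|; set p := `|psi 1|.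
nra.
Qed.

Lemma D_bound_ge1 (R : realType) (psi : R -> R) (beta alpha C H : R) :
  0 < beta -> beta < 1 -> 1 <= alpha -> alpha <= 2 * beta -> 0 <= C ->
  (forall x, 1 <= x -> derivable psi x 1 /\ derivable (derive1 psi) x 1) ->
  (forall x, 1 < x -> `|derive1 (derive1 psi) x| <= C * x^-1 * (x - 1) `^ (alpha - 1)) ->
  derive1 psi 1 = beta * psi 1 ->
  forall h, 0 < h -> h <= H ->
  `|Dh psi beta h| <= (`|psi 1| * (2 * beta) + 2 * (C * H `^ (alpha - 1))) * h ^+ 2.
Proof.
move=> b0 b1 a1 a2b C0 dpsi bpsi dpsi1 h h0 hH.
have h1 : 1 < 1 + h by rewrite ltrDl.
set f := fun x : R => x `^ (2 * beta).
have df (x : R) : 0 < x -> derive1 f x = 2 * beta * x `^ (2 * beta - 1).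
  by move=> x0; rewrite /f powR_derive1 // in_itv /= x0.
have P1 : `|f (1 + h) - f 1 - derive1 f 1 * (1 + h - 1)| <= 2 * beta * (1 + h - 1) ^+ 2.
  apply: taylor2 => //.
    move=> x x1 _; apply: derivable_powR; rewrite in_itv /=; apply/andP; split => //.
    by apply: lt_le_trans x1.
  move=> x x1 _; rewrite !df ?ltr01 //; last by apply: lt_trans x1.
  rewrite powR1.
  have e1 : 1 <= x `^ (2 * beta - 1) by apply: powR_ge1; [exact: ltW|lra].
  have e2 : x `^ (2 * beta - 1) <= x by apply: ler1_powR; [exact: ltW|lra].
  rewrite ger0_norm; last by nra.
  nra.
have P2 : `|psi (1 + h) - psi 1 - derive1 psi 1 * (1 + h - 1)|
          <= C * H `^ (alpha - 1) * (1 + h - 1) ^+ 2.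
  apply: taylor2 => //.
    by move=> x x1 _; apply: (dpsi x x1).1.
  move=> x x1 xh; apply: taylor1 => //.
    by move=> y y1 _; apply: (dpsi y y1).2.
  move=> y y1 yx; apply: (le_trans (bpsi y y1)).
  rewrite -mulrA ler_wpM2l //.
  have y0 : 0 < y by apply: lt_trans y1.
  rewrite -[leRHS]mul1r ler_pM //.
  - by rewrite invr_ge0 ltW.
  - exact: powR_ge0.
  - by rewrite invf_le1 // ltW.
  apply: ge0_ler_powR; rewrite ?nnegrE; try lra.
have -> : Dh psi beta h = psi 1 * (f (1 + h) - f 1 - derive1 f 1 * (1 + h - 1))
   - 2 * (psi (1 + h) - psi 1 - derive1 psi 1 * (1 + h - 1)).
  rewrite df ?ltr01 // dpsi1 /f powR1 /Dh; ring.
apply: (le_trans (ler_normB _ _)); rewrite !normrM (@ger0_norm _ 2) //.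
have := normr_ge0 (psi 1); move: P1 P2.
have := powR_ge0 H (alpha - 1).
set A := `|_ - _ * _|; set B := `|psi _ - _ - _|; set p := `|psi 1|; set q := H `^ _.
rewrite addrAC subrr add0r.
nra.
Qed.

Lemma der_cont (R : realType) (f : R -> R) (x : R) : derivable f x 1 -> {for x, continuous f}.
Proof. by move/derivable1_diffP; exact: differentiable_continuous. Qed.

Lemma Dh_cont (R : realType) (psi : R -> R) (beta : R) :
  (forall x, 1 <= x -> derivable psi x 1) ->
  forall h, 0 < h -> {for h, continuous (Dh psi beta)}.
Proof.
move=> dpsi h h0.
have c1 : {for h, continuous (fun h : R => 1 + h)}.
  by apply: continuousD; [exact: cst_continuous|exact: cvg_id].
rewrite /Dh.
apply: continuousB.
  apply: continuousD; last exact: cst_continuous.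
  apply: continuousM; last exact: cst_continuous.
  apply: (@continuous_comp _ _ _ (fun h : R => 1 + h) (fun y => y `^ (2 * beta)) _ c1).
  apply: der_cont; apply: derivable_powR.
  by rewrite in_itv /= andbT; lra.
apply: continuousM; first exact: cst_continuous.
apply: (@continuous_comp _ _ _ (fun h : R => 1 + h) psi _ c1).
apply: der_cont; apply: dpsi; lra.
Qed.

Lemma Dh_inv_cont (R : realType) (psi : R -> R) (beta : R) :
  (forall x, 1 <= x -> derivable psi x 1) ->
  forall s : R, 0 < s -> {for s, continuous (fun s : R => Dh psi beta s^-1)}.
Proof.
move=> dpsi s s0.
have ci : {for s, continuous (fun s : R => s^-1)}.
  by apply: inv_continuous; rewrite gt_eqF.
have c1 : {for s, continuous (fun s : R => 1 + s^-1)}.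
  by apply: continuousD; [exact: cst_continuous|exact: ci].
have h0 : 0 < s^-1 by rewrite invr_gt0.
rewrite /Dh.
apply: continuousB.
  apply: continuousD; last exact: cst_continuous.
  apply: continuousM; last exact: cst_continuous.
  apply: (@continuous_comp _ _ _ (fun h : R => 1 + h^-1) (fun y => y `^ (2 * beta)) _ c1).
  apply: der_cont; apply: derivable_powR.
  by rewrite in_itv /= andbT; lra.
apply: continuousM; first exact: cst_continuous.
apply: (@continuous_comp _ _ _ (fun h : R => 1 + h^-1) psi _ c1).
apply: der_cont; apply: dpsi; lra.
Qed.

Lemma u1_cont (R : realType) (psi : R -> R) (beta alpha lambda : R) :
  (forall x, 1 <= x -> derivable psi x 1) ->
  {in `]0, +oo[, continuous (fun s : R => Dh psi beta s^-1 * s `^ alpha / (2 * lambda))}.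
Proof.
move=> dpsi s; rewrite in_itv /= andbT => s0.
suff H : {for s, continuous (fun s1 : R => Dh psi beta s1^-1 * s1 `^ alpha / (2 * lambda))} by exact: H.
apply: continuousM; last exact: cst_continuous.
apply: continuousM; first exact: Dh_inv_cont.
apply: der_cont; apply: derivable_powR.
by rewrite in_itv /= andbT.
Qed.

Theorem lemma4p1 (d : measure_display) (T : measurableType d) (R : realType)
    (P : probability T R) (X : R -> T -> R) (beta alpha lambda : R)
    (psi : R -> R) :
  0 < beta -> beta < 1 ->
  centered_gaussian_process P X ->
  self_similar P beta X ->
  H1 P beta X alpha lambda psi ->
  exists u1 : R -> R,
    {in `]0, +oo[, continuous u1} /\
    (forall s : R, 0 < s ->
       ('E_P[fun w => ((X (s + 1) w - X s w) ^+ 2)%R]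
        = (2 * lambda * s `^ (2 * beta - alpha) * (1 + u1 s))%:E)%E) /\
    (forall eta : R, 0 < eta ->
       exists C_eta : R, 0 < C_eta /\
         forall s : R, eta <= s ->
           `|u1 s| <= C_eta * s `^ (- delta1 alpha)).
Proof.
move=> b0 b1 [HX _] Hss [[[a0 a2b] l0] Hphi [U [oU [sU dU]]] [C [C0 HC]] Hd1].
have dpsi2 : forall x, 1 <= x -> derivable psi x 1 /\ derivable (derive1 psi) x 1.
  by move=> x x1; apply: dU; apply: sU; rewrite /= in_itv /= andbT.
have dpsi : forall x, 1 <= x -> derivable psi x 1 by move=> x /dpsi2 [].
exists (fun s => Dh psi beta s^-1 * s `^ alpha / (2 * lambda)).
split; first exact: u1_cont.
split.
  move=> s s0.
  rewrite (@var_formula _ _ _ P beta X alpha lambda psi HX Hss a0 Hphi s s0).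
  congr EFin.
  have sn0 : s != 0 by rewrite gt_eqF.
  have QA : s `^ (2 * beta - alpha) * s `^ alpha = s `^ (2 * beta).
    by rewrite -powRD ?sn0 ?implybT // subrK.
  have BA : (s^-1) `^ alpha * s `^ alpha = 1.
    by rewrite -powRM ?invr_ge0 ?ltW // mulVf // powR1.
  rewrite -QA /Dh.
  set Q := s `^ (2 * beta - alpha); set A := s `^ alpha; set B := (s^-1) `^ alpha.
  have -> : Q * A * ((1 + s^-1) `^ (2 * beta) * psi 1 + psi 1 -
      2 * (- lambda * B + psi (1 + s^-1))) =
      Q * A * ((1 + s^-1) `^ (2 * beta) * psi 1 + psi 1 - 2 * psi (1 + s^-1))
      + 2 * lambda * Q * (B * A) by ring.
  rewrite BA; field.
  by rewrite gt_eqF.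
move=> eta eta0.
set H := eta^-1.
have key : forall s, eta <= s -> [/\ 0 < s, 0 < s^-1 & s^-1 <= H].
  move=> s es; have s0 : 0 < s by apply: lt_le_trans es.
  by split => //; [rewrite invr_gt0|rewrite lef_pV2].
have l2 : 0 < (2 * lambda)^-1 by rewrite invr_gt0 mulr_gt0.
rewrite /delta1; case: ifP => a1.
  set K := `|psi 1| * (2 + H) + 2 * C.
  have K0 : 0 <= K by rewrite addr_ge0 ?mulr_ge0 // addr_ge0 // ltW // invr_gt0.
  exists (K / (2 * lambda) + 1); split.
    by rewrite ltr_wpDl // mulr_ge0 // ltW.
  move=> s /key [s0 h0 hH].
  have Hb := @D_bound_lt1 R psi beta alpha C H b0 b1 a1 C0 dpsi
    (fun x x1 => (HC x x1).1) _ h0 hH.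
  have -> : s `^ (- (1 - alpha)) = s `^ alpha * s^-1.
    rewrite opprB powRB; last by rewrite (gt_eqF s0) implybT.
    by rewrite powRr1 // ltW.
  rewrite normrM normrM (@ger0_norm _ (s `^ alpha)) ?powR_ge0 //.
  rewrite (@ger0_norm _ (2 * lambda)^-1); last exact: ltW.
  have A0 := powR_ge0 s alpha.
  move: Hb; set Y := `|Dh _ _ _|; set A := s `^ alpha; set L := (2 * lambda)^-1.
  move=> Hb.
  have : Y * A * L <= K * s^-1 * A * L by apply: ler_wpM2r; [exact: ltW | exact: ler_wpM2r].
  have : 0 <= A * s^-1 by rewrite mulr_ge0 // ltW.
  rewrite /L; nra.
have a1' : 1 <= alpha by rewrite leNgt a1.
set K := `|psi 1| * (2 * beta) + 2 * (C * H `^ (alpha - 1)).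
have K0 : 0 <= K.
  by rewrite /K; have := normr_ge0 (psi 1); have := powR_ge0 H (alpha - 1); nra.
exists (K / (2 * lambda) + 1); split.
  by rewrite ltr_wpDl // mulr_ge0 // ltW.
move=> s /key [s0 h0 hH].
have Hb := @D_bound_ge1 R psi beta alpha C H b0 b1 a1' a2b C0 dpsi2
  (fun x x1 => (HC x x1).2) (Hd1 a1') _ h0 hH.
have -> : s `^ (- (2 - alpha)) = s `^ alpha * s^-1 ^+ 2.
  rewrite opprB powRB; last by rewrite (gt_eqF s0) implybT.
  by rewrite powR_mulrn ?ltW // exprVn.
rewrite normrM normrM (@ger0_norm _ (s `^ alpha)) ?powR_ge0 //.
rewrite (@ger0_norm _ (2 * lambda)^-1); last exact: ltW.
have A0 := powR_ge0 s alpha.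
move: Hb; set Y := `|Dh _ _ _|; set A := s `^ alpha; set L := (2 * lambda)^-1.
move=> Hb.
have : Y * A * L <= K * s^-1 ^+ 2 * A * L by apply: ler_wpM2r; [exact: ltW | exact: ler_wpM2r].
have : 0 <= A * s^-1 ^+ 2 by rewrite mulr_ge0 // exprn_ge0 // ltW.
rewrite /L; nra.
Qed.
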